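(* Let $\mathcal{M}\subset\mathbb{R}^d$ be a Riemannian manifold, let $\mathcal{Z}=\mathcal{Z}_1\times\dots\times\mathcal{Z}_s$ be a Cartesian product of finite nonempty sets, and let $\mathcal{E}$ be a finite nonempty set. Let $p_{(z,e)}$, $(z,e)\in\mathcal{Z}\times\mathcal{E}$, be non-negative scalars with $\sum_{e\in\mathcal{E}}p_{(z,e)}=1$ for each $z\in\mathcal{Z}$, and let $\{\mathbf{u}_{(z,e)}\mid(z,e)\in\mathcal{Z}\times\mathcal{E}\}\subset\mathcal{M}$ have weighted intrinsic mean $\mu$ with respect to the weights $w_{(z,e)}=p_{(z,e)}/\sum_{(z',e')}p_{(z',e')}$. For $z\in\mathcal{Z}$ put $\mathbf{v}_z=\sum_{e\in\mathcal{E}}p_{(z,e)}\mathrm{Log}_\mu(\mathbf{u}_{(z,e)})$ and $\mathbf{u}_z=\mathrm{Exp}_\mu(\mathbf{v}_z)$. Then the set $\{\mathbf{u}_z\}_{z\in\mathcal{Z}}$ has (unweighted) intrinsic mean $\mu$.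
   Context: $\mathcal{M}$ has intrinsic (geodesic) distance $d_\mathcal{M}$. For $\mu\in\mathcal{M}$, $T_\mu\mathcal{M}$ is the tangent space, $\mathrm{Exp}_\mu$ the exponential map and $\mathrm{Log}_\mu=\mathrm{Exp}_\mu^{-1}$ its (local) inverse. Given points $\mathbf{u}_1,\dots,\mathbf{u}_N\in\mathcal{M}$ and weights $w_i\ge0$ with $\sum_iw_i=1$, the weighted intrinsic mean is $\arg\min_{\mathbf{u}\in\mathcal{M}}\sum_iw_i\,d_\mathcal{M}(\mathbf{u},\mathbf{u}_i)^2$ (unweighted: $w_i=1/N$). Standing assumption of the paper: intrinsic means exist and are unique, the logarithmic map is defined at the relevant points, and a point $\mu$ is the (weighted) intrinsic mean of a set exactly when it satisfies the centering property $\sum_iw_i\,\mathrm{Log}_\mu(\mathbf{u}_i)=0$. *)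

(* Defs.v *)
From HB Require Import structures.
From mathcomp Require Import all_boot all_order all_algebra.
From mathcomp Require Import reals.
Set Implicit Arguments. Unset Strict Implicit. Unset Printing Implicit Defensive.
Import Order.TTheory GRing.Theory Num.Theory.
Local Open Scope ring_scope.

(* Abstract model of a Riemannian manifold M ⊂ R^d (no differential geometry
   library is available): M is a predicate on row vectors 'rV[R]_d, dist is
   the intrinsic distance d_M, T mu is a matrix whose row space is the tangent
   space T_mu M, Exp mu / Log mu are the exponential / logarithmic maps at mu. *)

Definition wobj {R : realType} {d : nat} (dist : 'rV[R]_d -> 'rV[R]_d -> R)
  (I : finType) (w : I -> R) (u : I -> 'rV[R]_d) (x : 'rV[R]_d) : R :=
  \sum_(i : I) w i * (dist x (u i)) ^+ 2.

Definition is_wmean {R : realType} {d : nat} (M : 'rV[R]_d -> Prop)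
  (dist : 'rV[R]_d -> 'rV[R]_d -> R)
  (I : finType) (w : I -> R) (u : I -> 'rV[R]_d) (mu : 'rV[R]_d) : Prop :=
  M mu /\
  (forall x, M x -> wobj dist w u mu <= wobj dist w u x) /\
  (forall x, M x -> wobj dist w u x <= wobj dist w u mu -> x = mu).

(* Main.v *)
Require Import Defs.
From HB Require Import structures.
From mathcomp Require Import all_boot all_order all_algebra.
From mathcomp Require Import reals.
Import Order.TTheory GRing.Theory Num.Theory.
Local Open Scope ring_scope.

Theorem lemma2 (R : realType) (d : nat)
  (M : 'rV[R]_d -> Prop) (dist : 'rV[R]_d -> 'rV[R]_d -> R)
  (T : 'rV[R]_d -> 'M[R]_d)
  (Exp Log : 'rV[R]_d -> 'rV[R]_d -> 'rV[R]_d)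
  (HExpM : forall mu v, M mu -> (v <= T mu)%MS -> M (Exp mu v))
  (HLogT : forall mu x, M mu -> M x -> (Log mu x <= T mu)%MS)
  (* standing assumption: (unique) weighted intrinsic mean <-> centering *)
  (Hcenter : forall (I : finType) (w : I -> R) (v : I -> 'rV[R]_d) (m : 'rV[R]_d),
      (forall i, 0 <= w i) -> \sum_(i : I) w i = 1 ->
      (forall i, M (v i)) -> M m ->
      (is_wmean M dist w v m <-> \sum_(i : I) w i *: Log m (v i) = 0))
  (s : nat) (Zs : 'I_s -> finType) (HZ : forall i, (0 < #|Zs i|)%N)
  (E : finType) (HE : (0 < #|E|)%N)
  (p : {dffun forall i : 'I_s, Zs i} -> E -> R)
  (Hp0 : forall z e, 0 <= p z e)
  (Hp1 : forall z, \sum_(e : E) p z e = 1)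
  (u : {dffun forall i : 'I_s, Zs i} -> E -> 'rV[R]_d)
  (Hu : forall z e, M (u z e))
  (mu : 'rV[R]_d)
  (Hmean : is_wmean M dist
             (fun ze : {dffun forall i : 'I_s, Zs i} * E =>
                p ze.1 ze.2 /
                \sum_(ze' : {dffun forall i : 'I_s, Zs i} * E) p ze'.1 ze'.2)
             (fun ze : {dffun forall i : 'I_s, Zs i} * E => u ze.1 ze.2) mu)
  (* standing assumption: Log_mu is defined at (is the local inverse of Exp_mu at) the relevant points *)
  (HLog : forall z : {dffun forall i : 'I_s, Zs i},
      Log mu (Exp mu (\sum_(e : E) p z e *: Log mu (u z e)))
      = \sum_(e : E) p z e *: Log mu (u z e)) :
  is_wmean M dist
    (fun _ : {dffun forall i : 'I_s, Zs i} =>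
       (#|{: {dffun forall i : 'I_s, Zs i}}|%:R)^-1)
    (fun z : {dffun forall i : 'I_s, Zs i} =>
       Exp mu (\sum_(e : E) p z e *: Log mu (u z e)))
    mu.
Proof.
set Z := ({dffun forall i : 'I_s, Zs i}).
have [HMmu _] := Hmean.
have HN : (0 < #|{: Z}|)%N.
  rewrite card_dep_ffun foldrE big_map; exact: prodn_gt0.
have HN' : (#|{: Z}|%:R : R) != 0 by rewrite pnatr_eq0 -lt0n.
have HS : \sum_(ze : Z * E) p ze.1 ze.2 = #|{: Z}|%:R.
  rewrite -(pair_bigA _ (fun z e => p z e)) /=.
  under eq_bigr => z _ do rewrite Hp1.
  by rewrite sumr_const.
have Hc := Hcenter (Z * E)%type
  (fun ze => p ze.1 ze.2 / \sum_(ze' : Z * E) p ze'.1 ze'.2)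
  (fun ze => u ze.1 ze.2) mu.
rewrite HS in Hc Hmean.
have H0 : \sum_(ze : Z * E) (p ze.1 ze.2 / #|{: Z}|%:R) *: Log mu (u ze.1 ze.2) = 0.
  apply/Hc => //.
  - by move=> ze; rewrite divr_ge0 ?ler0n.
  - by rewrite -mulr_suml HS mulfV.
apply/Hcenter => //.
- by move=> _; rewrite invr_ge0 ler0n.
- rewrite sumr_const; rewrite [X in X = 1](_ : _ = #|{:Z}|%:R^-1 * #|{:Z}|%:R); [exact: mulVf | by rewrite mulr_natr].
- move=> z; apply: HExpM => //.
  apply: summx_sub => e _; apply: scalemx_sub; exact: HLogT.
under eq_bigr => z _ do rewrite HLog.
rewrite -scaler_sumr.
move: H0; rewrite -(pair_bigA _ (fun z e => (p z e / #|{: Z}|%:R) *: Log mu (u z e))) /=.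
under eq_bigr => z _ do under eq_bigr => e _ do rewrite mulrC -scalerA.
under eq_bigr => z _ do rewrite -scaler_sumr.
by rewrite -scaler_sumr.
Qed.
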